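(* $(I(\mathbb N),\tau_{pp})$ is a Polish topological inverse semigroup, and $d=\rho+\rho^\ast$ is a complete metric compatible with $\tau_{pp}$.
   Context: $I(\mathbb N)$ is the set of all bijections $f:A\to B$ with $A,B\subseteq\mathbb N$ (including the empty map), $\mathrm{dom}(f)=A$, $\mathrm{im}(f)=B$, under composition ($\mathrm{dom}(f\circ g)=g^{-1}(\mathrm{dom}(f)\cap\mathrm{im}(g))$) and inversion $f\mapsto f^{-1}$. For $x,y$: $v(x,y)=\{f: x\in\mathrm{dom}(f), f(x)=y\}$, $w_1(x)=\{f: x\notin\mathrm{dom}(f)\}$, $w_2(y)=\{f: y\notin\mathrm{im}(f)\}$; $\tau_{pp}$ is the topology generated by all these sets. For $f,g\in I(\mathbb N)$ and $n\in\mathbb N$ let $a_{(f,g)}(n)=0$ if $n\in\mathrm{dom}(f)\cap\mathrm{dom}(g)$ or $n\notin\mathrm{dom}(f)\cup\mathrm{dom}(g)$, and $1$ otherwise; $b_{(f,g)}(n)=\min\{1,|f(n)-g(n)|\}$ if $n\in\mathrm{dom}(f)\cap\mathrm{dom}(g)$ and $0$ otherwise. $\rho(f,g)=\sum_{n\in\mathbb N}\frac{a_{(f,g)}(n)+b_{(f,g)}(n)}{2^n}$, $\rho^\ast(f,g)=\rho(f^{-1},g^{-1})$. A topological inverse semigroup has continuous multiplication and inversion. *)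

(* Defs.v *)
From Stdlib Require Import Reals Lra Lia List ClassicalEpsilon.
From Coquelicot Require Import Coquelicot.
Open Scope R_scope.

(** A partial bijection of N: a partial function (None = undefined)
    that is injective on its domain.  dom f = {n | f n <> None},
    im f = {m | exists n, f n = Some m}. *)
Definition pinj (f : nat -> option nat) : Prop :=
  forall x y z, f x = Some z -> f y = Some z -> x = y.

Definition IN := { f : nat -> option nat | pinj f }.

Definition app (f : IN) (n : nat) : option nat := proj1_sig f n.

Definition in_dom (f : IN) (n : nat) : Prop := app f n <> None.
Definition in_im (f : IN) (m : nat) : Prop := exists n, app f n = Some m.

Definition comp_fun (f g : nat -> option nat) (n : nat) : option nat :=
  match g n with Some m => f m | None => None end.

Lemma comp_pinj f g : pinj f -> pinj g -> pinj (comp_fun f g).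
Proof.
  unfold pinj, comp_fun; intros Hf Hg x y z Hx Hy.
  destruct (g x) as [a|] eqn:Ea; [|discriminate].
  destruct (g y) as [b|] eqn:Eb; [|discriminate].
  assert (a = b) by (eapply Hf; eauto). subst. eapply Hg; eauto.
Qed.

Definition pcomp (f g : IN) : IN :=
  exist _ (comp_fun (proj1_sig f) (proj1_sig g))
          (comp_pinj _ _ (proj2_sig f) (proj2_sig g)).

Definition inv_fun (f : nat -> option nat) (m : nat) : option nat :=
  match excluded_middle_informative (exists n, f n = Some m) with
  | left H => Some (proj1_sig (constructive_indefinite_description _ H))
  | right _ => None
  end.

Lemma inv_pinj f : pinj (inv_fun f).
Proof.
  unfold pinj, inv_fun; intros x y z Hx Hy.
  destruct (excluded_middle_informative _) as [H1|]; [|discriminate].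
  destruct (excluded_middle_informative _) as [H2|]; [|discriminate].
  destruct (constructive_indefinite_description _ H1) as [a Ha].
  destruct (constructive_indefinite_description _ H2) as [b Hb].
  simpl in *. injection Hx; injection Hy; intros; subst.
  rewrite Ha in Hb. now injection Hb.
Qed.

Definition pinv (f : IN) : IN := exist _ (inv_fun (proj1_sig f)) (inv_pinj _).

(** Codes for the subbasic sets v(x,y), w1(x), w2(y). *)
Inductive subbasic := SV (x y : nat) | SW1 (x : nat) | SW2 (y : nat).

Definition sb_set (s : subbasic) (f : IN) : Prop :=
  match s with
  | SV x y => app f x = Some y
  | SW1 x => app f x = None
  | SW2 y => ~ in_im f y
  end.

Definition tau_pp_open (U : IN -> Prop) : Prop :=
  forall f, U f -> exists l : list subbasic,
    List.Forall (fun s => sb_set s f) l /\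
    (forall g, List.Forall (fun s => sb_set s g) l -> U g).

Definition a_fg (f g : IN) (n : nat) : R :=
  match app f n, app g n with
  | Some _, Some _ => 0
  | None, None => 0
  | _, _ => 1
  end.

Definition b_fg (f g : IN) (n : nat) : R :=
  match app f n, app g n with
  | Some u, Some v => Rmin 1 (Rabs (INR u - INR v))
  | _, _ => 0
  end.

Definition rho (f g : IN) : R :=
  Series (fun n => (a_fg f g n + b_fg f g n) / 2 ^ n).

Definition rho_star (f g : IN) : R := rho (pinv f) (pinv g).

Definition dmet (f g : IN) : R := rho f g + rho_star f g.

Definition is_metric {X : Type} (d : X -> X -> R) : Prop :=
  (forall x y, 0 <= d x y) /\
  (forall x y, d x y = 0 <-> x = y) /\
  (forall x y, d x y = d y x) /\
  (forall x y z, d x z <= d x y + d y z).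

Definition metric_open {X : Type} (d : X -> X -> R) (U : X -> Prop) : Prop :=
  forall x, U x -> exists eps, 0 < eps /\ forall y, d x y < eps -> U y.

Definition compatible {X : Type} (d : X -> X -> R) (opn : (X -> Prop) -> Prop)
  : Prop := forall U, opn U <-> metric_open d U.

Definition complete_metric {X : Type} (d : X -> X -> R) : Prop :=
  forall u : nat -> X,
    (forall eps, 0 < eps -> exists N, forall m n, (N <= m)%nat -> (N <= n)%nat ->
        d (u m) (u n) < eps) ->
    exists l, forall eps, 0 < eps -> exists N, forall n, (N <= n)%nat ->
        d (u n) l < eps.

Definition separable {X : Type} (opn : (X -> Prop) -> Prop) : Prop :=
  exists s : nat -> X, forall U, opn U -> (exists x, U x) -> exists n, U (s n).

Definition polish {X : Type} (opn : (X -> Prop) -> Prop) : Prop :=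
  separable opn /\
  exists d : X -> X -> R, is_metric d /\ complete_metric d /\ compatible d opn.

Definition continuous2 {X : Type} (opn : (X -> Prop) -> Prop)
  (m : X -> X -> X) : Prop :=
  forall U, opn U -> forall x y, U (m x y) ->
    exists V W, opn V /\ opn W /\ V x /\ W y /\
      forall x' y', V x' -> W y' -> U (m x' y').

Definition continuous1 {X : Type} (opn : (X -> Prop) -> Prop)
  (i : X -> X) : Prop :=
  forall U, opn U -> opn (fun x => U (i x)).

Definition topological_inverse_semigroup {X : Type}
  (opn : (X -> Prop) -> Prop) (m : X -> X -> X) (i : X -> X) : Prop :=
  (forall x y z, m x (m y z) = m (m x y) z) /\
  (forall x, m (m x (i x)) x = x) /\
  (forall x, m (m (i x) x) (i x) = i x) /\
  (forall e e', m e e = e -> m e' e' = e' -> m e e' = m e' e) /\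
  continuous2 opn m /\ continuous1 opn i.

(* Main.v *)
Require Import Defs.
From Stdlib Require List Cantor.
From Stdlib Require Import ZArith Reals Lra Lia Classical ClassicalEpsilon FunctionalExtensionality ProofIrrelevance.
From Coquelicot Require Import Coquelicot.
Open Scope R_scope.
Local Open Scope list_scope.

Lemma IN_ext (f g : IN) : (forall n, app f n = app g n) -> f = g.
Proof.
  destruct f as [f pf], g as [g pg]; unfold app; simpl; intros H.
  assert (f = g) by (apply functional_extensionality; auto). subst.
  f_equal; apply proof_irrelevance.
Qed.

Lemma inv_spec (f : IN) m n : app (pinv f) m = Some n <-> app f n = Some m.
Proof.
  unfold app, pinv; simpl; unfold inv_fun.
  destruct (excluded_middle_informative _) as [H|H].
  - destruct (constructive_indefinite_description _ H) as [a Ha]; simpl.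
    split; intro E.
    + injection E; intros; subst; auto.
    + f_equal. eapply (proj2_sig f); eauto.
  - split; intro E; [discriminate|]. exfalso; apply H; eauto.
Qed.

Lemma inv_none (f : IN) m : app (pinv f) m = None <-> ~ in_im f m.
Proof.
  unfold in_im; split.
  - intros E [n Hn]. apply inv_spec in Hn. congruence.
  - intros H. destruct (app (pinv f) m) eqn:E; auto.
    exfalso; apply H. exists n. apply inv_spec; auto.
Qed.

Lemma opt_eq (X Y : option nat) : (forall n, X = Some n <-> Y = Some n) -> X = Y.
Proof.
  intros H; destruct X as [x|], Y as [y|]; auto.
  - apply H; auto.
  - symmetry; apply H; auto.
  - apply H; auto.
Qed.

Definition cc (f g : IN) n := a_fg f g n + b_fg f g n.

Lemma rmin_tri (a b c : R) :
  Rmin 1 (Rabs (a - c)) <= Rmin 1 (Rabs (a - b)) + Rmin 1 (Rabs (b - c)).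
Proof.
  assert (Rabs (a - c) <= Rabs (a - b) + Rabs (b - c)).
  { replace (a - c) with ((a - b) + (b - c)) by ring. apply Rabs_triang. }
  pose proof (Rabs_pos (a-b)); pose proof (Rabs_pos (b-c)).
  unfold Rmin; repeat destruct Rle_dec; lra.
Qed.

Lemma cc_bounds f g n : 0 <= cc f g n <= 2.
Proof.
  unfold cc, a_fg, b_fg.
  destruct (app f n), (app g n); try lra.
  pose proof (Rabs_pos (INR n0 - INR n1)). unfold Rmin; destruct Rle_dec; lra.
Qed.

Lemma cc_sym f g n : cc f g n = cc g f n.
Proof.
  unfold cc, a_fg, b_fg.
  destruct (app f n), (app g n); try lra. rewrite Rabs_minus_sym; auto.
Qed.

Lemma cc_tri f g h n : cc f h n <= cc f g n + cc g h n.
Proof.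
  unfold cc, a_fg, b_fg.
  destruct (app f n), (app g n), (app h n); try lra;
  try (pose proof (rmin_tri (INR n0) (INR n1) (INR n2)); lra);
  try (match goal with |- context [Rmin 1 (Rabs ?x)] =>
       pose proof (Rabs_pos x); unfold Rmin; destruct Rle_dec; lra end);
  try (repeat match goal with |- context [Rmin 1 (Rabs ?x)] =>
       pose proof (Rabs_pos x); revert dependent x end;
       intros; unfold Rmin; repeat destruct Rle_dec; lra).
Qed.

Lemma cc_self f n : cc f f n = 0.
Proof.
  unfold cc, a_fg, b_fg. destruct (app f n); try lra.
  replace (INR n0 - INR n0) with 0 by ring. rewrite Rabs_R0.
  unfold Rmin; destruct Rle_dec; lra.
Qed.

Lemma cc_lt1 f g n : cc f g n < 1 -> app f n = app g n.
Proof.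
  unfold cc, a_fg, b_fg.
  destruct (app f n) as [u|], (app g n) as [v|]; try lra; auto.
  intros H. destruct (Nat.lt_trichotomy u v) as [h|[h|h]]; auto; exfalso.
  - assert (INR (S u) <= INR v) by (apply le_INR; lia). rewrite S_INR in H0.
    rewrite Rabs_left1 in H by lra. unfold Rmin in H; destruct Rle_dec; lra.
  - assert (INR (S v) <= INR u) by (apply le_INR; lia). rewrite S_INR in H0.
    rewrite Rabs_right in H by lra. unfold Rmin in H; destruct Rle_dec; lra.
Qed.

Lemma cc_eq0 f g n : app f n = app g n -> cc f g n = 0.
Proof.
  unfold cc, a_fg, b_fg. intros E; rewrite E.
  destruct (app g n); try lra.
  replace (INR n0 - INR n0) with 0 by ring. rewrite Rabs_R0.
  unfold Rmin; destruct Rle_dec; lra.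
Qed.

Lemma p2pos n : 0 < 2 ^ n.
Proof. apply pow_lt; lra. Qed.

Lemma inv2pow n : / 2 ^ n = (/ 2) ^ n.
Proof. rewrite pow_inv; auto. Qed.

Lemma ex_geom c : ex_series (fun n => c * (/2) ^ n).
Proof.
  apply (ex_series_scal_l c (fun n => (/2)^n)).
  apply ex_series_geom. rewrite Rabs_pos_eq; lra.
Qed.

Lemma series_geom c : Series (fun n => c * (/2) ^ n) = 2 * c.
Proof.
  rewrite Series_scal_l, Series_geom by (rewrite Rabs_pos_eq; lra). field.
Qed.

Lemma ex_term f g : ex_series (fun n => cc f g n / 2 ^ n).
Proof.
  apply (@ex_series_le R_AbsRing R_CompleteNormedModule _ (fun n => 2 * (/2)^n)); [|apply ex_geom].
  intros n. change (norm (cc f g n / 2 ^ n)) with (Rabs (cc f g n / 2 ^ n)).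
  pose proof (cc_bounds f g n). pose proof (p2pos n).
  rewrite Rabs_pos_eq. 2:{ apply Rmult_le_pos; [lra|]. left; apply Rinv_0_lt_compat; auto. }
  unfold Rdiv. rewrite <- inv2pow. apply Rmult_le_compat_r; [|lra].
  left; apply Rinv_0_lt_compat; auto.
Qed.

Lemma term_nonneg f g n : 0 <= cc f g n / 2 ^ n.
Proof.
  pose proof (cc_bounds f g n). pose proof (p2pos n).
  apply Rmult_le_pos; [lra|]. left; apply Rinv_0_lt_compat; auto.
Qed.

Lemma series_zero : Series (fun _ => 0) = 0.
Proof.
  rewrite <- (Series_ext (fun n => 0 * 0)) by (intros; ring).
  rewrite Series_scal_l. ring.
Qed.

Lemma series_nonneg a : (forall n, 0 <= a n) -> ex_series a -> 0 <= Series a.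
Proof.
  intros H E. rewrite <- series_zero. apply Series_le; auto. intros; split; [lra|auto].
Qed.

Lemma rho_nonneg f g : 0 <= rho f g.
Proof. apply series_nonneg; [apply term_nonneg | apply ex_term]. Qed.

Lemma sum_ge_last a n : (forall k, 0 <= a k) -> a n <= sum_f_R0 a n.
Proof.
  intros H; destruct n; simpl; [lra|].
  pose proof (cond_pos_sum a n H); lra.
Qed.

Lemma term_le_rho f g n : cc f g n / 2 ^ n <= rho f g.
Proof.
  unfold rho. change (fun n => (a_fg f g n + b_fg f g n) / 2 ^ n) with (fun n => cc f g n / 2 ^ n).
  rewrite (Series_incr_n _ (S n)) by (lia || apply ex_term). simpl Init.Nat.pred.
  pose proof (sum_ge_last (fun n => cc f g n / 2 ^ n) n (term_nonneg f g)).
  assert (0 <= Series (fun k => cc f g (S n + k)%nat / 2 ^ (S n + k))).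
  { apply series_nonneg. intros; apply term_nonneg.
    apply (@ex_series_le R_AbsRing R_CompleteNormedModule _ (fun k => cc f g (S n + k)%nat / 2 ^ (S n + k))).
    - intros k. change (norm ?x) with (Rabs x). rewrite Rabs_pos_eq; [lra|apply term_nonneg].
    - apply (ex_series_incr_n (fun n => cc f g n / 2 ^ n) (S n)). apply ex_term. }
  lra.
Qed.

Lemma rho_self f : rho f f = 0.
Proof.
  unfold rho. rewrite <- series_zero. apply Series_ext. intros n.
  change (cc f f n / 2 ^ n = 0). rewrite cc_self. unfold Rdiv; ring.
Qed.

Lemma rho_sym f g : rho f g = rho g f.
Proof.
  unfold rho. apply Series_ext. intros n.
  change (cc f g n / 2 ^ n = cc g f n / 2 ^ n). rewrite cc_sym; auto.
Qed.

Lemma rho_tri f g h : rho f h <= rho f g + rho g h.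
Proof.
  unfold rho.
  change (Series (fun n => cc f h n / 2 ^ n) <=
    Series (fun n => cc f g n / 2 ^ n) + Series (fun n => cc g h n / 2 ^ n)).
  rewrite <- Series_plus by apply ex_term.
  apply Series_le.
  - intros n; split; [apply term_nonneg|].
    pose proof (cc_tri f g h n). pose proof (p2pos n).
    unfold Rdiv. rewrite <- Rmult_plus_distr_r. apply Rmult_le_compat_r; [|lra].
    left; apply Rinv_0_lt_compat; auto.
  - apply (@ex_series_plus R_AbsRing R_NormedModule); apply ex_term.
Qed.

Lemma rho_small f g N : rho f g < / 2 ^ N -> forall n, (n <= N)%nat -> app f n = app g n.
Proof.
  intros H n Hn. apply cc_lt1.
  pose proof (term_le_rho f g n).
  assert (/ 2 ^ N <= / 2 ^ n).
  { apply Rinv_le_contravar. apply p2pos. apply Rle_pow; [lra|auto]. }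
  pose proof (p2pos n).
  assert (cc f g n / 2 ^ n < / 2 ^ n) by lra.
  unfold Rdiv in H3. apply Rmult_lt_reg_r with (/ 2 ^ n).
  apply Rinv_0_lt_compat; auto. lra.
Qed.

Lemma rho_bound f g N : (forall n, (n <= N)%nat -> app f n = app g n) -> rho f g <= 2 / 2 ^ N.
Proof.
  intros H. unfold rho.
  change (Series (fun n => cc f g n / 2 ^ n) <= 2 / 2 ^ N).
  rewrite (Series_incr_n_aux _ (S N)).
  2:{ intros k Hk. rewrite cc_eq0 by (apply H; lia). unfold Rdiv; ring. }
  replace (2 / 2 ^ N) with (2 * (2 / 2 ^ (S N))) by (simpl; field; apply Rgt_not_eq, p2pos).
  rewrite <- series_geom. apply Series_le; [|apply ex_geom].
  intros k; split; [apply term_nonneg|].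
  pose proof (cc_bounds f g (S N + k)). rewrite pow_add.
  unfold Rdiv. rewrite Rinv_mult. rewrite inv2pow. rewrite (inv2pow k).
  pose proof (pow_lt (/2) (S N)). pose proof (pow_lt (/2) k).
  assert (0 < /2) by lra. specialize (H1 H3). specialize (H2 H3).
  rewrite <- Rmult_assoc. apply Rmult_le_compat_r; [lra|]. apply Rmult_le_compat_r; lra.
Qed.

Definition agree N (f g : IN) := forall n, (n <= N)%nat ->
  app f n = app g n /\ app (pinv f) n = app (pinv g) n.

Lemma dmet_small f g N : dmet f g < / 2 ^ N -> agree N f g.
Proof.
  unfold dmet, rho_star; intros H n Hn.
  pose proof (rho_nonneg f g). pose proof (rho_nonneg (pinv f) (pinv g)).
  split; [apply (rho_small f g N) | apply (rho_small (pinv f) (pinv g) N)]; auto; lra.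
Qed.

Lemma dmet_bound f g N : agree N f g -> dmet f g <= 4 / 2 ^ N.
Proof.
  unfold dmet, rho_star; intros H.
  assert (rho f g <= 2 / 2 ^ N) by (apply rho_bound; intros; apply H; auto).
  assert (rho (pinv f) (pinv g) <= 2 / 2 ^ N) by (apply rho_bound; intros; apply H; auto).
  unfold Rdiv in *. lra.
Qed.

Lemma dmet_metric : is_metric dmet.
Proof.
  unfold dmet, rho_star. split; [|split; [|split]].
  - intros; pose proof (rho_nonneg x y); pose proof (rho_nonneg (pinv x) (pinv y)); lra.
  - intros x y; split.
    + intros H. pose proof (rho_nonneg x y); pose proof (rho_nonneg (pinv x) (pinv y)).
      apply IN_ext; intros n. apply (rho_small x y n); [|lia].
      assert (0 < / 2 ^ n) by (apply Rinv_0_lt_compat, p2pos). lra.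
    + intros ->. rewrite !rho_self; ring.
  - intros; pose proof (rho_sym x y); pose proof (rho_sym (pinv x) (pinv y)); lra.
  - intros. pose proof (rho_tri x y z); pose proof (rho_tri (pinv x) (pinv y) (pinv z)); lra.
Qed.

Lemma small_pow (eps : R) : 0 < eps -> exists N, 4 / 2 ^ N < eps.
Proof.
  intros He. destruct (archimed (4 / eps)) as [H1 _].
  assert (0 < 4 / eps) by (apply Rdiv_lt_0_compat; lra).
  set (z := up (4 / eps)) in *.
  assert (0 <= z)%Z by (apply le_0_IZR; lra).
  exists (Z.to_nat z).
  assert (INR (Z.to_nat z) = IZR z) by (rewrite INR_IZR_INZ, Z2Nat.id; auto).
  pose proof (Rle_pow_lin 1 (Z.to_nat z)). replace (1+1) with 2 in H3 by ring.
  assert (4 / eps * eps < INR (Z.to_nat z) * eps) by (apply Rmult_lt_compat_r; lra).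
  replace (4/eps*eps) with 4 in H4 by (field; lra).
  pose proof (p2pos (Z.to_nat z)).
  apply Rmult_lt_reg_r with (2 ^ Z.to_nat z); auto.
  unfold Rdiv; rewrite Rmult_assoc, Rinv_l by lra.
  assert (0 <= INR (Z.to_nat z)) by apply pos_INR. nra.
Qed.

Definition sbs (l : list subbasic) (g : IN) := List.Forall (fun s => sb_set s g) l.

Lemma basic_open l : tau_pp_open (sbs l).
Proof. intros f H. exists l; split; auto. Qed.

Definition idx (s : subbasic) : nat :=
  match s with SV x y => Nat.max x y | SW1 x => x | SW2 y => y end.

Definition bound (l : list subbasic) : nat := List.fold_right (fun s a => Nat.max (idx s) a) 0%nat l.

Lemma bound_in l s : List.In s l -> (idx s <= bound l)%nat.
Proof.
  induction l as [|t l IH]; simpl; [tauto|]. intros [->|H]; [lia|]. specialize (IH H); lia.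
Qed.

Lemma sb_agree s f g N : (idx s <= N)%nat -> agree N f g -> sb_set s f -> sb_set s g.
Proof.
  intros Hi A; destruct s; simpl in *.
  - destruct (A x) as [E _]; [lia|]. congruence.
  - destruct (A x) as [E _]; [lia|]. congruence.
  - intros H. apply inv_none. apply inv_none in H. destruct (A y) as [_ E]; [lia|]. congruence.
Qed.

Lemma agree_sbs l f g N : (bound l <= N)%nat -> agree N f g -> sbs l f -> sbs l g.
Proof.
  unfold sbs; intros Hb A H. rewrite List.Forall_forall in *. intros s Hs.
  apply (sb_agree s f g N); auto. pose proof (bound_in l s Hs); lia.
Qed.

Definition agree_list (f : IN) N : list subbasic :=
  List.flat_map (fun n =>
    (match app f n with Some y => SV n y | None => SW1 n end) ::
    (match app (pinv f) n with Some x => SV x n | None => SW2 n end) :: nil)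
    (List.seq 0 (S N)).

Lemma agree_list_self f N : sbs (agree_list f N) f.
Proof.
  unfold sbs, agree_list. rewrite List.Forall_forall. intros s Hs.
  apply List.in_flat_map in Hs. destruct Hs as [n [_ Hs]].
  destruct Hs as [<-|[<-|[]]].
  - destruct (app f n) eqn:E; simpl; auto.
  - destruct (app (pinv f) n) eqn:E; simpl.
    + apply inv_spec; auto.
    + apply inv_none; auto.
Qed.

Lemma agree_list_agree f g N : sbs (agree_list f N) g -> agree N f g.
Proof.
  unfold sbs, agree_list. rewrite List.Forall_forall. intros H n Hn.
  assert (Hin : List.In n (List.seq 0 (S N))) by (apply List.in_seq; lia).
  assert (H1 : sb_set (match app f n with Some y => SV n y | None => SW1 n end) g).
  { apply H. apply List.in_flat_map. exists n. split; auto. left; auto. }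
  assert (H2 : sb_set (match app (pinv f) n with Some x => SV x n | None => SW2 n end) g).
  { apply H. apply List.in_flat_map. exists n. split; auto. right; left; auto. }
  split.
  - destruct (app f n) eqn:E; simpl in H1; auto.
  - destruct (app (pinv f) n) eqn:E; simpl in H2.
    + symmetry; apply inv_spec; auto.
    + symmetry; apply inv_none; auto.
Qed.

Lemma compat : compatible dmet tau_pp_open.
Proof.
  intros U; split.
  - intros HU f Hf. destruct (HU f Hf) as [l [H1 H2]].
    exists (/ 2 ^ bound l). split; [apply Rinv_0_lt_compat, p2pos|].
    intros y Hy. apply H2. apply (agree_sbs l f y (bound l)); auto.
    apply dmet_small; auto.
  - intros HU f Hf. destruct (HU f Hf) as [eps [He H]].
    destruct (small_pow eps He) as [N HN].
    exists (agree_list f N). split; [apply agree_list_self|].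
    intros g Hg. apply H. pose proof (dmet_bound f g N (agree_list_agree f g N Hg)). lra.
Qed.

Fixpoint mx (M : nat -> nat) K : nat :=
  match K with 0%nat => M 0%nat | S k => Nat.max (M (S k)) (mx M k) end.

Lemma mx_ge M K n : (n <= K)%nat -> (M n <= mx M K)%nat.
Proof.
  induction K; intros H; simpl.
  - assert (n = 0%nat) by lia; subst; lia.
  - destruct (Nat.eq_dec n (S K)); [subst; lia|]. specialize (IHK ltac:(lia)); lia.
Qed.

Lemma complete : complete_metric dmet.
Proof.
  intros u Hc.
  assert (HM : forall n : nat, exists M, forall m k, (M <= m)%nat -> (M <= k)%nat ->
            dmet (u m) (u k) < / 2 ^ n).
  { intros n; apply Hc; apply Rinv_0_lt_compat, p2pos. }
  set (M := fun n => proj1_sig (constructive_indefinite_description _ (HM n))).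
  assert (HMs : forall n m k, (M n <= m)%nat -> (M n <= k)%nat -> dmet (u m) (u k) < / 2 ^ n).
  { intros n; unfold M; destruct (constructive_indefinite_description _ _); simpl; auto. }
  assert (Hst : forall n k, (M n <= k)%nat ->
     app (u k) n = app (u (M n)) n /\ app (pinv (u k)) n = app (pinv (u (M n))) n).
  { intros n k Hk. apply (dmet_small _ _ n); [|lia]. apply HMs; lia. }
  set (F := fun n => app (u (M n)) n).
  assert (pF : pinj F).
  { intros x y z Hx Hy. unfold F in *.
    set (k := Nat.max (M x) (M y)).
    destruct (Hst x k) as [E1 _]; [unfold k; lia|].
    destruct (Hst y k) as [E2 _]; [unfold k; lia|].
    apply (proj2_sig (u k) x y z); unfold app in *; congruence. }
  set (l := exist _ F pF : IN).
  assert (Hinv : forall m, app (pinv l) m = app (pinv (u (M m))) m).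
  { intros m. apply opt_eq. intros n. rewrite inv_spec.
    change (app l n) with (F n). unfold F.
    set (k := Nat.max (M n) (M m)).
    destruct (Hst n k) as [E1 _]; [unfold k; lia|].
    destruct (Hst m k) as [_ E2]; [unfold k; lia|].
    rewrite <- E1, <- E2. rewrite inv_spec. tauto. }
  exists l. intros eps He. destruct (small_pow eps He) as [K HK].
  exists (mx M K). intros k Hk.
  assert (agree K (u k) l).
  { intros n Hn. pose proof (mx_ge M K n Hn).
    destruct (Hst n k) as [E1 E2]; [lia|]. split.
    - rewrite E1; auto.
    - rewrite Hinv; auto. }
  pose proof (dmet_bound _ _ _ H). lra.
Qed.

Lemma app_comp f g n : app (pcomp f g) n = match app g n with Some m => app f m | None => None end.
Proof. reflexivity. Qed.

Lemma idem_id (e : IN) : pcomp e e = e -> forall x y, app e x = Some y -> y = x.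
Proof.
  intros He x y Hx.
  assert (E : app (pcomp e e) x = app e x) by (rewrite He; auto).
  rewrite app_comp, Hx in E.
  symmetry; apply (proj2_sig e x y y); auto.
Qed.

Lemma algebra : (forall x y z, pcomp x (pcomp y z) = pcomp (pcomp x y) z) /\
  (forall x, pcomp (pcomp x (pinv x)) x = x) /\
  (forall x, pcomp (pcomp (pinv x) x) (pinv x) = pinv x) /\
  (forall e e', pcomp e e = e -> pcomp e' e' = e' -> pcomp e e' = pcomp e' e).
Proof.
  split; [|split; [|split]].
  - intros; apply IN_ext; intros n. rewrite !app_comp.
    destruct (app z n); auto. rewrite ?app_comp. auto.
  - intros; apply IN_ext; intros n. rewrite !app_comp.
    destruct (app x n) eqn:E; auto. rewrite ?app_comp.
    assert (app (pinv x) n0 = Some n) by (apply inv_spec; auto). rewrite H; auto.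
  - intros; apply IN_ext; intros n. rewrite !app_comp.
    destruct (app (pinv x) n) eqn:E; auto. rewrite ?app_comp.
    assert (app x n0 = Some n) by (apply inv_spec; auto). rewrite H; auto.
  - intros e e' H H'. apply IN_ext; intros n. rewrite !app_comp.
    destruct (app e' n) eqn:E'; destruct (app e n) eqn:E; auto.
    + pose proof (idem_id e' H' _ _ E'); pose proof (idem_id e H _ _ E); subst. congruence.
    + pose proof (idem_id e' H' _ _ E'); subst; auto.
    + pose proof (idem_id e H _ _ E); subst; auto.
Qed.

Lemma sbs1 s f : sbs (s :: nil) f <-> sb_set s f.
Proof.
  unfold sbs; split; intros H.
  - inversion H; auto.
  - constructor; auto.
Qed.

Lemma sbs_app l1 l2 f : sbs (l1 ++ l2) f <-> sbs l1 f /\ sbs l2 f.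
Proof. unfold sbs. apply List.Forall_app. Qed.

Lemma sbs_nil f : sbs nil f.
Proof. constructor. Qed.

Lemma comp_sb s f g : sb_set s (pcomp f g) -> exists lf lg, sbs lf f /\ sbs lg g /\
  forall f' g', sbs lf f' -> sbs lg g' -> sb_set s (pcomp f' g').
Proof.
  destruct s as [x y|x|y]; unfold sb_set; rewrite ?app_comp.
  - destruct (app g x) as [m|] eqn:E; [|discriminate]. intros H.
    exists (SV m y :: nil), (SV x m :: nil). rewrite !sbs1; cbn [sb_set]. repeat split; auto.
    intros f' g'. rewrite !sbs1; cbn [sb_set]. intros H1 H2. rewrite app_comp, H2; auto.
  - destruct (app g x) as [m|] eqn:E; intros H.
    + exists (SW1 m :: nil), (SV x m :: nil). rewrite !sbs1; cbn [sb_set]. repeat split; auto.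
      intros f' g'. rewrite !sbs1; cbn [sb_set]. intros H1 H2. rewrite app_comp, H2; auto.
    + exists nil, (SW1 x :: nil). rewrite !sbs1; cbn [sb_set]. repeat split; auto using sbs_nil.
      intros f' g' _. rewrite !sbs1; cbn [sb_set]. intros H2. rewrite app_comp, H2; auto.
  - intros H. destruct (classic (in_im f y)) as [[m Hm]|Hn].
    + exists (SV m y :: nil), (SW2 m :: nil). rewrite !sbs1; cbn [sb_set]. repeat split; auto.
      * intros [n Hn]. apply H. exists n. rewrite app_comp, Hn; auto.
      * intros f' g'. rewrite !sbs1; cbn [sb_set]. intros H1 H2 [n Hn].
        rewrite app_comp in Hn. destruct (app g' n) as [k|] eqn:E; [|discriminate].
        assert (k = m) by (apply (proj2_sig f' k m y); auto). subst.
        apply H2; exists n; auto.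
    + exists (SW2 y :: nil), nil. rewrite !sbs1; cbn [sb_set]. repeat split; auto using sbs_nil.
      intros f' g'. rewrite !sbs1; cbn [sb_set]. intros H1 _ [n Hn2].
      rewrite app_comp in Hn2. destruct (app g' n) as [k|]; [|discriminate].
      apply H1; exists k; auto.
Qed.

Lemma comp_sbs l f g : sbs l (pcomp f g) -> exists lf lg, sbs lf f /\ sbs lg g /\
  forall f' g', sbs lf f' -> sbs lg g' -> sbs l (pcomp f' g').
Proof.
  induction l as [|s l IH]; intros H.
  - exists nil, nil; repeat split; intros; apply sbs_nil.
  - inversion H; subst.
    destruct (comp_sb s f g H2) as [lf1 [lg1 [A1 [B1 C1]]]].
    destruct (IH H3) as [lf2 [lg2 [A2 [B2 C2]]]].
    exists (lf1 ++ lf2), (lg1 ++ lg2). rewrite !sbs_app. repeat split; auto.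
    intros f' g'. rewrite !sbs_app. intros [] []. constructor; [apply C1; auto | apply (C2 f' g'); auto].
Qed.

Lemma cont2 : continuous2 tau_pp_open pcomp.
Proof.
  intros U HU x y Hxy. destruct (HU _ Hxy) as [l [Hl HlU]].
  destruct (comp_sbs l x y Hl) as [lf [lg [A [B C]]]].
  exists (sbs lf), (sbs lg). split; [apply basic_open|]. split; [apply basic_open|].
  split; auto. split; auto. intros x' y' H1 H2. apply HlU. apply C; auto.
Qed.

Definition tr (s : subbasic) : subbasic :=
  match s with SV x y => SV y x | SW1 x => SW2 x | SW2 y => SW1 y end.

Lemma tr_spec s h : sb_set (tr s) h <-> sb_set s (pinv h).
Proof.
  destruct s as [x y|x|y]; cbn [tr sb_set].
  - rewrite inv_spec; tauto.
  - rewrite inv_none; tauto.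
  - unfold in_im. split.
    + intros H [n Hn]. apply (proj1 (inv_spec h n y)) in Hn. congruence.
    + intros H. destruct (app h y) eqn:E; auto. exfalso; apply H. exists n. apply inv_spec; auto.
Qed.

Lemma tr_sbs l h : sbs (List.map tr l) h <-> sbs l (pinv h).
Proof.
  induction l as [|s l IH]; simpl.
  - split; intros; apply sbs_nil.
  - unfold sbs in *. rewrite !List.Forall_cons_iff, IH, tr_spec. tauto.
Qed.

Lemma cont1 : continuous1 tau_pp_open pinv.
Proof.
  intros U HU f Hf. destruct (HU _ Hf) as [l [Hl HlU]].
  exists (List.map tr l). split.
  - apply tr_sbs; auto.
  - intros g Hg. apply HlU. apply tr_sbs; auto.
Qed.

Definition oenc (o : option nat) : nat := match o with None => 0%nat | Some m => S m end.
Definition odec (n : nat) : option nat := match n with 0%nat => None | S m => Some m end.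

Fixpoint enc (l : list (option nat)) : nat :=
  match l with nil => 0%nat | x :: l => S (Cantor.to_nat (oenc x, enc l)) end.

Fixpoint dec (fuel n : nat) : list (option nat) :=
  match fuel with
  | 0%nat => nil
  | S k => match n with
           | 0%nat => nil
           | S n' => let (a, b) := Cantor.of_nat n' in odec a :: dec k b
           end
  end.

Lemma dec_enc l : forall k, (enc l <= k)%nat -> dec k (enc l) = l.
Proof.
  induction l as [|x l IH]; intros k Hk.
  - destruct k; reflexivity.
  - change (enc (x :: l)) with (S (Cantor.to_nat (oenc x, enc l))) in *.
    destruct k; [lia|].
    change (dec (S k) (S (Cantor.to_nat (oenc x, enc l)))) with
      (let (a, b) := Cantor.of_nat (Cantor.to_nat (oenc x, enc l)) in odec a :: dec k b).
    rewrite Cantor.cancel_of_to.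
    pose proof (Cantor.to_nat_non_decreasing (oenc x) (enc l)).
    cbv zeta. rewrite IH by lia. destruct x; reflexivity.
Qed.

Definition lfun (L : list (option nat)) (n : nat) : option nat := List.nth n L None.

Lemma pinj_empty : pinj (fun _ => None).
Proof. intros x y z H; discriminate. Qed.

Definition sq (k : nat) : IN :=
  match excluded_middle_informative (pinj (lfun (dec k k))) with
  | left H => exist _ _ H
  | right _ => exist _ _ pinj_empty
  end.

Lemma nth_map_seq (g : nat -> option nat) len : forall start n,
  List.nth n (List.map g (List.seq start len)) None =
  if (n <? len)%nat then g (start + n)%nat else None.
Proof.
  induction len as [|len IH]; intros start n; simpl.
  - destruct n; auto.
  - destruct n; simpl.
    + rewrite Nat.add_0_r; auto.
    + rewrite IH. replace (start + S n)%nat with (S start + n)%nat by lia.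
      destruct (n <? len)%nat eqn:E1; destruct (S n <? S len)%nat eqn:E2; auto;
      apply Nat.ltb_lt in E1 || apply Nat.ltb_ge in E1;
      apply Nat.ltb_lt in E2 || apply Nat.ltb_ge in E2; lia.
Qed.

Lemma separ : separable tau_pp_open.
Proof.
  exists sq. intros U HU [f Hf]. destruct (HU f Hf) as [l [Hl HlU]].
  set (N := bound l).
  set (L := List.map (app f) (List.seq 0 (S N))).
  assert (HL : forall n, lfun L n = if (n <? S N)%nat then app f n else None).
  { intros n; unfold lfun, L; rewrite nth_map_seq; auto. }
  assert (Hr : forall n z, lfun L n = Some z -> app f n = Some z).
  { intros n z; rewrite HL; destruct (n <? S N)%nat; congruence. }
  assert (pL : pinj (lfun L)).
  { intros x y z Hx Hy. apply (proj2_sig f x y z); apply Hr; auto. }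
  exists (enc L). apply HlU.
  assert (Hsq : forall n, app (sq (enc L)) n = lfun L n).
  { intros n. unfold sq. rewrite dec_enc by lia.
    destruct (excluded_middle_informative _); [reflexivity|contradiction]. }
  unfold sbs in *. rewrite List.Forall_forall in *. intros s Hs.
  pose proof (bound_in l s Hs). fold N in H. specialize (Hl s Hs).
  destruct s as [x y|x|y]; cbn [sb_set idx] in *.
  - rewrite Hsq, HL. destruct (x <? S N)%nat eqn:E; auto.
    apply Nat.ltb_ge in E; lia.
  - rewrite Hsq, HL. destruct (x <? S N)%nat; auto.
  - intros [n Hn]. rewrite Hsq in Hn. apply Hl. exists n. apply Hr; auto.
Qed.

Theorem theorem4p4 :
  polish tau_pp_open /\
  topological_inverse_semigroup tau_pp_open pcomp pinv /\
  is_metric dmet /\ complete_metric dmet /\ compatible dmet tau_pp_open.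
Proof.
  split; [split; [apply separ|exists dmet; split; [apply dmet_metric|split; [apply complete|apply compat]]]|].
  split; [|split; [apply dmet_metric|split; [apply complete|apply compat]]].
  destruct algebra as [A1 [A2 [A3 A4]]].
  split; [exact A1|split; [exact A2|split; [exact A3|split; [exact A4|split; [apply cont2|apply cont1]]]]].
Qed.
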